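(* Let $\gamma:\mathrm{Cl}(V,h)\to\mathrm{End}_\mathbb{C}(S)$ and $\gamma':\mathrm{Cl}(V',h')\to\mathrm{End}_\mathbb{C}(S')$ be weakly-faithful complex Clifford representations. Then any isomorphism $(\varphi_0,\varphi):\gamma\to\gamma'$ of complex Clifford representations is determined by the linear isomorphism $\varphi:S\to S'$: we have $\mathrm{Ad}(\varphi)(\gamma(V))=\gamma'(V')$ and $\varphi_0=(\gamma'|_{V'})^{-1}\circ\mathrm{Ad}(\varphi)\circ\gamma|_V$. Conversely, any $\mathbb{C}$-linear isomorphism $\varphi:S\to S'$ satisfying $\mathrm{Ad}(\varphi)(\gamma(V))=\gamma'(V')$ determines an isomorphism of quadratic spaces $\varphi_0:(V,h)\to(V',h')$ through $\varphi_0=(\gamma'|_{V'})^{-1}\circ\mathrm{Ad}(\varphi)\circ\gamma|_V$, and $(\varphi_0,\varphi)$ is an isomorphism of complex Clifford representations from $\gamma$ to $\gamma'$.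
   Context: Real quadratic spaces $(V,h)$ are finite-dimensional real vector spaces with non-degenerate symmetric bilinear forms; $\mathrm{Cl}(V,h)$ is the real Clifford algebra, and an isometry $\varphi_0$ induces the unique unital algebra morphism $\mathrm{Cl}(\varphi_0)$ extending it. A complex Clifford representation is a unital morphism of real algebras $\gamma:\mathrm{Cl}(V,h)\to\mathrm{End}_\mathbb{C}(S)$, $S$ a finite-dimensional complex vector space; it is weakly-faithful if $\gamma|_V:V\to\mathrm{End}_\mathbb{C}(S)$ is injective. A morphism from $\gamma$ to $\gamma'$ is a pair $(\varphi_0,\varphi)$, $\varphi_0:(V,h)\to(V',h')$ an isometry and $\varphi:S\to S'$ $\mathbb{C}$-linear, with $\gamma'(\mathrm{Cl}(\varphi_0)(x))\circ\varphi=\varphi\circ\gamma(x)$ for all $x\in\mathrm{Cl}(V,h)$; it is an isomorphism iff $\varphi_0$ and $\varphi$ are bijective. $\mathrm{Ad}(\varphi)(A)=\varphi\circ A\circ\varphi^{-1}$. *)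

(* Defs.v *)
From HB Require Import structures.
From mathcomp Require Import all_boot all_order all_algebra.
From mathcomp Require Import complex reals.
Set Implicit Arguments. Unset Strict Implicit. Unset Printing Implicit Defensive.
Import Order.TTheory GRing.Theory Num.Theory.
Local Open Scope ring_scope.

Section Defs.
Variable R : realType.

Definition rc (r : R) : R[i] := Complex r 0.

Definition quad_form (V : vectType R) (h : V -> V -> R) : Prop :=
  [/\ forall (a : R) (u v w : V), h (a *: u + v) w = a * h u w + h v w,
      forall u v : V, h u v = h v u
    & forall u : V, (forall v, h u v = 0) -> u = 0].

Definition ralg_morph (A B : algType R) (F : A -> B) : Prop :=
  [/\ forall (a : R) (x y : A), F (a *: x + y) = a *: F x + F y,
      forall x y : A, F (x * y) = F x * F y
    & F 1 = 1].

(** [(A, iota)] is a (the) real Clifford algebra [Cl(V,h)]: iota is linear with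
    [iota v * iota v = h v v] and [(A, iota)] is universal for this property. *)
Definition clifford_map (V : vectType R) (h : V -> V -> R) (B : algType R)
  (f : V -> B) : Prop :=
  (forall (a : R) (u v : V), f (a *: u + v) = a *: f u + f v) /\
  (forall v : V, f v * f v = (h v v)%:A).

Definition is_clifford_algebra (V : vectType R) (h : V -> V -> R)
  (A : algType R) (iota : V -> A) : Prop :=
  clifford_map h iota /\
  forall (B : algType R) (f : V -> B), clifford_map h f ->
    exists F : A -> B, [/\ ralg_morph F, forall v, F (iota v) = f v
      & forall G : A -> B, ralg_morph G -> (forall v, G (iota v) = f v) ->
          forall x, G x = F x].

(** Complex Clifford representations: unital morphisms of real algebras
    [Cl(V,h) -> End_C(S)], the real structure on [End_C(S)] being the
    scaling by [rc r], and its product the composition. *)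
Definition clifford_rep (A : algType R) (S : vectType R[i]) (g : A -> 'End(S))
  : Prop :=
  [/\ forall (a : R) (x y : A), g (a *: x + y) = rc a *: g x + g y,
      forall x y : A, g (x * y) = (g x \o g y)%VF
    & g 1 = \1%VF].

Definition weakly_faithful (V : vectType R) (A : algType R) (iota : V -> A)
  (S : vectType R[i]) (g : A -> 'End(S)) : Prop :=
  injective (fun v => g (iota v)).

Definition quad_isometry (V V' : vectType R) (h : V -> V -> R) (h' : V' -> V' -> R)
  (phi0 : 'Hom(V, V')) : Prop :=
  forall u v : V, h' (phi0 u) (phi0 v) = h u v.

Definition is_Cl_map (V V' : vectType R) (A A' : algType R) (iota : V -> A)
  (iota' : V' -> A') (phi0 : 'Hom(V, V')) (F : A -> A') : Prop :=
  ralg_morph F /\ forall v, F (iota v) = iota' (phi0 v).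

Definition clrep_morphism (V V' : vectType R) (h : V -> V -> R)
  (h' : V' -> V' -> R) (A A' : algType R) (iota : V -> A) (iota' : V' -> A')
  (S S' : vectType R[i]) (g : A -> 'End(S)) (g' : A' -> 'End(S'))
  (phi0 : 'Hom(V, V')) (phi : 'Hom(S, S')) : Prop :=
  quad_isometry h h' phi0 /\
  forall F : A -> A', is_Cl_map iota iota' phi0 F ->
    forall x : A, (g' (F x) \o phi = phi \o g x)%VF.

Definition clrep_iso (V V' : vectType R) (h : V -> V -> R)
  (h' : V' -> V' -> R) (A A' : algType R) (iota : V -> A) (iota' : V' -> A')
  (S S' : vectType R[i]) (g : A -> 'End(S)) (g' : A' -> 'End(S'))
  (phi0 : 'Hom(V, V')) (phi : 'Hom(S, S')) : Prop :=
  [/\ clrep_morphism h h' iota iota' g g' phi0 phi,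
      bijective phi0 & bijective phi].

Definition Ad (S S' : vectType R[i]) (phi : 'Hom(S, S')) (B : 'End(S))
  : 'End(S') := (phi \o B \o phi^-1)%VF.

Definition gammaV (V : vectType R) (A : algType R) (iota : V -> A)
  (S : vectType R[i]) (g : A -> 'End(S)) : 'End(S) -> Prop :=
  fun B => exists v : V, B = g (iota v).

Definition Ad_set (S S' : vectType R[i]) (phi : 'Hom(S, S'))
  (P : 'End(S) -> Prop) : 'End(S') -> Prop :=
  fun B' => exists B, P B /\ B' = Ad phi B.

End Defs.

(* Main.v *)
Set Warnings "-all".
Require Import Defs.
From HB Require Import structures.
From mathcomp Require Import all_boot all_order all_algebra.
From mathcomp Require Import complex reals.
Import Order.TTheory GRing.Theory Num.Theory.
Local Open Scope ring_scope.

From mathcomp Require Import lra.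
From Stdlib Require Import FunctionalExtensionality PropExtensionality.

Lemma linfunE_lin (K : fieldType) (U W : vectType K) (f : U -> W)
  (lf : forall a u v, f (a *: u + v) = a *: f u + f v) u : linfun f u = f u.
Proof.
pose ff : {linear U -> W} := HB.pack f (GRing.isLinear.Build K U W *:%R f lf).
exact: (lfunE ff u).
Qed.

Section RC.
Variable R : realType.
Lemma rcM (a b : R) : rc (a * b) = rc a * rc b.
Proof. by rewrite /rc /=; congr Complex; rewrite ?mulr0 ?mul0r ?subr0 ?addr0. Qed.
Lemma rcD (a b : R) : rc (a + b) = rc a + rc b.
Proof. by rewrite /rc /=; congr Complex; rewrite addr0. Qed.
Lemma rc1 : rc (1 : R) = 1. Proof. by []. Qed.
Lemma rcN1 : rc (-1 : R) = -1. Proof. by rewrite /rc /=; congr Complex; rewrite oppr0. Qed.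
Lemma rc_inj : injective (@rc R). Proof. by move=> a b [] . Qed.
End RC.

Definition EndR (R : realType) (S : vectType R[i]) (nz : (\1%VF : 'End(S)) != 0) : Type := 'End(S).
Section EndR.
Variables (R : realType) (S : vectType R[i]) (nz : (\1%VF : 'End(S)) != 0).
Local Notation EndR := (@EndR R S nz).
HB.instance Definition _ := GRing.Zmodule.on EndR.
HB.instance Definition _ := GRing.Zmodule_isNzRing.Build EndR
  (@comp_lfunA _ S S S S) (@comp_lfun1l _ S S) (@comp_lfun1r _ S S)
  (@comp_lfunDl _ S S S) (@comp_lfunDr _ S S S) nz.
Definition EndR_scale (a : R) (f : EndR) : EndR := (rc a *: (f : 'End(S)))%R.
Fact EndR_scalerA a b v : EndR_scale a (EndR_scale b v) = EndR_scale (a * b) v.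
Proof. by rewrite /EndR_scale scalerA rcM. Qed.
Fact EndR_scale1r : left_id 1 EndR_scale.
Proof. by move=> v; rewrite /EndR_scale rc1 scale1r. Qed.
Fact EndR_scalerDr : right_distributive EndR_scale +%R.
Proof. by move=> a u v; rewrite /EndR_scale scalerDr. Qed.
Fact EndR_scalerDl v : {morph EndR_scale^~ v: a b / a + b}.
Proof. by move=> a b; rewrite /EndR_scale rcD scalerDl. Qed.
HB.instance Definition _ := GRing.Zmodule_isLmodule.Build R EndR
  EndR_scalerA EndR_scale1r EndR_scalerDr EndR_scalerDl.
Fact EndR_scalerAl (a : R) (u v : EndR) : a *: (u * v) = (a *: u) * v.
Proof. exact: comp_lfunZl. Qed.
HB.instance Definition _ := GRing.Lmodule_isLalgebra.Build R EndR EndR_scalerAl.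
Fact EndR_scalerAr (a : R) (u v : EndR) : a *: (u * v) = u * (a *: v).
Proof. exact: comp_lfunZr. Qed.
HB.instance Definition _ := GRing.Lalgebra_isAlgebra.Build R EndR EndR_scalerAr.
Lemma EndR_scaleE a (f : EndR) : a *: f = (rc a *: (f : 'End(S)))%R :> 'End(S).
Proof. by []. Qed.
Lemma EndR_mulE (f g : EndR) : f * g = (f \o g)%VF :> 'End(S).
Proof. by []. Qed.
Lemma EndR_oneE : (1 : EndR) = \1%VF :> 'End(S). Proof. by []. Qed.
Lemma EndR_addE (f g : EndR) : f + g = (f : 'End(S)) + g :> 'End(S). Proof. by []. Qed.
End EndR.

Section Gen.
Variables (K : pzRingType) (U W : lmodType K) (F : U -> W).
Hypothesis HF : forall a x y, F (a *: x + y) = a *: F x + F y.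
Lemma lin0 : F 0 = 0.
Proof. by move: (HF (-1) 0 0); rewrite scaler0 addr0 scaleN1r addNr. Qed.
Lemma linZ a x : F (a *: x) = a *: F x.
Proof. by move: (HF a x 0); rewrite !addr0 lin0 addr0. Qed.
End Gen.

Section AdL.
Variables (R : realType) (U W : vectType R[i]) (f : 'Hom(U, W)) (bf : bijective f).
Lemma kerf : lker f == 0%VS.
Proof. by apply/lker0P; exact: bij_inj. Qed.
Lemma fVK : cancel f f^-1%VF.
Proof. exact: lker0_lfunK kerf. Qed.
Lemma fKV : cancel f^-1%VF f.
Proof.
move=> w; case: bf => k _ kK; rewrite -(kK w).
by apply: limg_lfunVK; apply: memv_img; apply: memvf.
Qed.
Lemma AdM B C : Ad f (B \o C)%VF = (Ad f B \o Ad f C)%VF.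
Proof. by apply/lfunP => w; rewrite /Ad !comp_lfunE fVK. Qed.
Lemma Ad1 : Ad f \1%VF = \1%VF.
Proof. by apply/lfunP => w; rewrite /Ad !comp_lfunE !id_lfunE fKV. Qed.
Lemma AdL c B C : Ad f (c *: B + C) = c *: Ad f B + Ad f C.
Proof. by apply/lfunP => w; rewrite /Ad !(comp_lfunE, add_lfunE, scale_lfunE) linearP. Qed.
Lemma AdZ c B : Ad f (c *: B) = c *: Ad f B.
Proof. by apply/lfunP => w; rewrite /Ad !(comp_lfunE, scale_lfunE) linearZ. Qed.
Lemma Ad_inj : injective (Ad f).
Proof.
move=> B C e; apply/lfunP => u; move/lfunP: e => /(_ (f u)).
by rewrite /Ad !comp_lfunE fVK; apply: (bij_inj bf).
Qed.
Lemma AdK B C : Ad f B = C -> (C \o f)%VF = (f \o B)%VF.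
Proof. by move=> <-; apply/lfunP => u; rewrite /Ad !comp_lfunE fVK. Qed.
Lemma KAd B C : (C \o f)%VF = (f \o B)%VF -> Ad f B = C.
Proof.
move=> e; apply/lfunP => w; rewrite /Ad -[w in RHS]fKV !comp_lfunE.
by have := congr1 (fun k => fun_of_lfun k (f^-1%VF w)) e; rewrite /= !comp_lfunE => ->.
Qed.
End AdL.

Section GL.
Variables (R : realType) (V : vectType R) (h : V -> V -> R) (A : algType R) (iota : V -> A)
  (S : vectType R[i]) (g : A -> 'End(S)).
Hypotheses (hA : is_clifford_algebra h iota) (hg : clifford_rep g).
Lemma g0 : g 0 = 0.
Proof. by case: hg => hl _ _; move: (hl (-1) 0 0); rewrite scaler0 addr0 rcN1 scaleN1r addNr. Qed.
Lemma gA a : g (a%:A) = rc a *: \1%VF.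
Proof. by case: hg => hl _ h1; move: (hl a 1 0); rewrite !addr0 g0 addr0 h1. Qed.
Lemma Gv_lin a u v : g (iota (a *: u + v)) = rc a *: g (iota u) + g (iota v).
Proof. by case: hA => [[hl _] _]; case: hg => hgl _ _; rewrite hl hgl. Qed.
Lemma Gv_sq v : (g (iota v) \o g (iota v))%VF = rc (h v v) *: \1%VF.
Proof. by case: hA => [[_ hs] _]; case: hg => _ hm _; rewrite -hm hs gA. Qed.
Lemma Gv0 : g (iota 0) = 0.
Proof. by case: hA => [[hl _] _]; rewrite (@lin0 _ _ _ _ hl) g0. Qed.
End GL.

Lemma h0 (R : realType) (V : vectType R) (h : V -> V -> R) (hq : quad_form h) w : h 0 w = 0.
Proof. by case: hq => hl _ _; move: (hl (-1) 0 0 w); rewrite scaler0 addr0 mulN1r addNr. Qed.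

Lemma polar (R : realType) (V V' : vectType R) (h : V -> V -> R) (h' : V' -> V' -> R)
  (hq : quad_form h) (hq' : quad_form h') (p : 'Hom(V, V')) :
  (forall v, h' (p v) (p v) = h v v) -> quad_isometry h h' p.
Proof.
move=> d u v.
have hD (k : V -> V -> R) : quad_form k -> forall x y z, k (x + y) z = k x z + k y z.
  by case=> hl _ _ x y z; move: (hl 1 x y z); rewrite scale1r mul1r.
have hS (k : V -> V -> R) : quad_form k -> forall x y, k x y = k y x by case.
have hD' (k : V' -> V' -> R) : quad_form k -> forall x y z, k (x + y) z = k x z + k y z.
  by case=> hl _ _ x y z; move: (hl 1 x y z); rewrite scale1r mul1r.
have hS' (k : V' -> V' -> R) : quad_form k -> forall x y, k x y = k y x by case.
have := d (u + v); rewrite linearD /= !(hD' _ hq') ![h' _ (p u + p v)](hS' _ hq') !(hD' _ hq').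
rewrite !(hD _ hq) ![h _ (u + v)](hS _ hq) !(hD _ hq) !d (hS' _ hq' (p v)) (hS _ hq v).
by move=> e; lra.
Qed.

Theorem proposition3p6 (R : realType)
  (V V' : vectType R) (h : V -> V -> R) (h' : V' -> V' -> R)
  (hq : quad_form h) (hq' : quad_form h')
  (A A' : algType R) (iota : V -> A) (iota' : V' -> A')
  (hA : is_clifford_algebra h iota) (hA' : is_clifford_algebra h' iota')
  (S S' : vectType R[i]) (g : A -> 'End(S)) (g' : A' -> 'End(S'))
  (hg : clifford_rep g) (hg' : clifford_rep g')
  (wf : weakly_faithful iota g) (wf' : weakly_faithful iota' g') :
  (forall (phi0 : 'Hom(V, V')) (phi : 'Hom(S, S')),
     clrep_iso h h' iota iota' g g' phi0 phi ->
     Ad_set phi (gammaV iota g) = gammaV iota' g' /\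
     (forall v : V, g' (iota' (phi0 v)) = Ad phi (g (iota v))))
  /\
  (forall phi : 'Hom(S, S'), bijective phi ->
     Ad_set phi (gammaV iota g) = gammaV iota' g' ->
     exists phi0 : 'Hom(V, V'),
       [/\ forall v : V, g' (iota' (phi0 v)) = Ad phi (g (iota v)),
           forall psi0 : 'Hom(V, V'),
             (forall v : V, g' (iota' (psi0 v)) = Ad phi (g (iota v))) ->
             psi0 = phi0,
           quad_isometry h h' phi0, bijective phi0
         & clrep_iso h h' iota iota' g g' phi0 phi]).
Proof.
split.
  move=> phi0 phi [[iso hF] bij0 bphi].
  have [F [Fm Fi _]] : exists F : A -> A', [/\ ralg_morph F,
      forall v, F (iota v) = iota' (phi0 v)
      & forall G : A -> A', ralg_morph G -> (forall v, G (iota v) = iota' (phi0 v)) ->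
          forall x, G x = F x].
    apply: hA.2; split.
      by move=> a u v; rewrite linearP; case: hA' => [[hl _] _]; rewrite hl.
    by move=> v; case: hA' => [[_ hs] _]; rewrite hs iso.
  have key : forall v, g' (iota' (phi0 v)) = Ad phi (g (iota v)).
    move=> v; symmetry; apply: KAd => //.
    by have := hF F (conj Fm Fi) (iota v); rewrite Fi.
  split => //.
  apply: functional_extensionality => B'; apply: propositional_extensionality; split.
    by case=> B [[v ->] ->]; exists (phi0 v); rewrite key.
  case=> v' ->; case: bij0 => k _ kK.
  exists (g (iota (k v'))); split; first by exists (k v').
  by rewrite -key kK.
move=> phi bphi Hset.
have key : forall v, exists v', g' (iota' v') == Ad phi (g (iota v)).
  move=> v.
  have : Ad_set phi (gammaV iota g) (Ad phi (g (iota v))).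
    by exists (g (iota v)); split => //; exists v.
  by rewrite Hset => -[v' e]; exists v'; rewrite e.
pose f v := xchoose (key v).
have Hf : forall v, g' (iota' (f v)) = Ad phi (g (iota v)).
  by move=> v; apply/eqP; exact: (xchooseP (key v)).
have flin : forall a u v, f (a *: u + v) = a *: f u + f v.
  move=> a u v; apply: wf' => /=.
  by rewrite (@Gv_lin _ _ _ _ _ _ _ hA' hg') Hf (@Gv_lin _ _ _ _ _ _ _ hA hg) AdL // !Hf.
pose phi0 := linfun f.
have phi0E : forall v, phi0 v = f v by exact: linfunE_lin.
have claim : forall v, g' (iota' (phi0 v)) = Ad phi (g (iota v)).
  by move=> v; rewrite phi0E Hf.
have inj0 : injective phi0.
  move=> u v e; apply: wf => /=; apply: (@Ad_inj _ _ _ phi bphi).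
  by rewrite -!claim e.
have surj0 : forall v', exists v, phi0 v == v'.
  move=> v'.
  have : gammaV iota' g' (g' (iota' v')) by exists v'.
  rewrite -Hset => -[B [[v ->] e]]; exists v; apply/eqP; apply: wf' => /=.
  by rewrite claim e.
have bij0 : bijective phi0.
  exists (fun v' => xchoose (surj0 v')).
    by move=> v; apply: inj0; apply/eqP; exact: (xchooseP (surj0 (phi0 v))).
  by move=> v'; apply/eqP; exact: (xchooseP (surj0 v')).
have isom : quad_isometry h h' phi0.
  apply: polar => // v.
  have [z|nz] := eqVneq (\1%VF : 'End(S')) 0.
    have all0 : forall E : 'End(S'), E = 0.
      by move=> E; rewrite -[E]comp_lfun1r z comp_lfun0r.
    have : phi0 v = 0.
      by apply: wf' => /=; rewrite (@Gv0 _ _ _ _ _ _ _ hA' hg') [LHS]all0.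
    rewrite -(linear0 phi0) => /inj0 ->; rewrite linear0 h0 // h0 //.
  apply: rc_inj; apply/eqP; rewrite -subr_eq0.
  suff: (rc (h' (phi0 v) (phi0 v)) - rc (h v v)) *: (\1%VF : 'End(S')) == 0 by rewrite scaler_eq0 (negbTE nz) orbF.
  apply/eqP.
  rewrite scalerBl -(@Gv_sq _ _ _ _ _ _ _ hA' hg') claim -AdM // (@Gv_sq _ _ _ _ _ _ _ hA hg).
  by rewrite AdZ // Ad1 // subrr.
exists phi0; split => //.
  by move=> psi0 Hpsi; apply/lfunP => v; apply: wf' => /=; rewrite Hpsi claim.
split => //; split => // F [Fm Fi] x.
have [z|nz] := eqVneq (\1%VF : 'End(S')) 0.
  have all0 : forall E : 'Hom(S, S'), E = 0.
    by move=> E; rewrite -[E]comp_lfun1l z comp_lfun0l.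
  by rewrite [LHS]all0 [RHS]all0.
apply: AdK => //.
pose G1 (y : A) : @EndR R S' nz := Ad phi (g y).
pose G2 (y : A) : @EndR R S' nz := g' (F y).
have G1m : ralg_morph G1.
  case: hg => hl hm h1; split.
  - move=> a y1 y2; rewrite /G1 hl.
    change (Ad phi (rc a *: g y1 + g y2) = rc a *: Ad phi (g y1) + Ad phi (g y2)).
    exact: AdL.
  - move=> y1 y2; rewrite /G1 hm.
    change (Ad phi (g y1 \o g y2)%VF = (Ad phi (g y1) \o Ad phi (g y2))%VF).
    exact: AdM.
  - rewrite /G1 h1; exact: Ad1.
have G2m : ralg_morph G2.
  case: hg' => hl hm h1; case: Fm => Fl Fmm F1; split.
  - by move=> a y1 y2; rewrite /G2 Fl hl.
  - by move=> y1 y2; rewrite /G2 Fmm hm.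
  - by rewrite /G2 F1 h1.
have cl : clifford_map h (fun v => G1 (iota v)).
  case: hA => [[hl hs] _]; case: G1m => Gl Gm G1e; split.
    by move=> a u v; rewrite hl Gl.
  by move=> v; rewrite -Gm hs (@linZ _ _ _ _ Gl) G1e.
have [F0 [_ _ uniq]] := hA.2 _ _ cl.
have e1 := uniq G1 G1m (fun v => erefl) x.
have e2 := uniq G2 G2m (fun v => _) x.
have : G1 x = G2 x.
  rewrite e1 e2 // => v; rewrite /G2 Fi claim //.
by [].
Qed.
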